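(* If $(\Phi,\{\Phi_{f,x}\}_{x\in D},D)$ is a labeled compact information algebra, then its associated domain-free information algebra $(\Phi/\sigma,D)$ is a domain-free compact information algebra. Furthermore, if $(\Phi,\{\Phi_{f,x}\}_{x\in D},D)$ is a labeled s-compact information algebra, then $(\Phi/\sigma,D)$ is a domain-free s-compact information algebra.
   Context: A labeled information algebra $(\Phi,D)$ consists of a lattice $D$, a set $\Phi$ with labeling $d:\Phi\to D$, combination $\otimes$ and marginalization $\phi^{\downarrow x}$ for $x\le d(\phi)$, such that: $\otimes$ is associative and commutative; for each $s\in D$ there is $e_s$ with $d(e_s)=s$ and $e_s\otimes\phi=\phi$ whenever $d(\phi)=s$; $d(\phi\otimes\psi)=d(\phi)\vee d(\psi)$; $d(\phi^{\downarrow x})=x$; $(\phi^{\downarrow y})^{\downarrow x}=\phi^{\downarrow x}$ for $x\le y\le d(\phi)$; $(\phi\otimes\psi)^{\downarrow x}=\phi\otimes\psi^{\downarrow x\wedge y}$ when $d(\phi)=x$, $d(\psi)=y$; $e_y^{\downarrow x}=e_x$ for $x\le y$; $\phi\otimes\phi^{\downarrow x}=\phi$. In any (labeled or domain-free) information algebra, $\psi\le\phi$ iff $\psi\otimes\phi=\phi$; suprema refer to this order; $a\ll b$ means: for every directed $X$ with $b\le\vee X$ there is $c\in X$ with $a\le c$. $\Phi_x=\{\phi:d(\phi)=x\}$, $\ll_x$ is the way-below relation in $(\Phi_x,\le)$, and $\Phi_{f,x}=\{\psi\in\Phi_x:\psi\ll_x\psi\}$. A labeled compact (resp. s-compact) information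 algebra $(\Phi,\{\Gamma_x\}_{x\in D},D)$: $D$ has a top element $\top$, each $\Gamma_x\subseteq\Phi_x$ is closed under combination and contains $e_x$, and (convergency) every directed $X\subseteq\Gamma_x$ has a supremum $\vee X\in\Phi_x$; (density) $\phi=\vee\{\psi\in\Gamma_x:\psi\ll_x\phi\}$ for all $\phi\in\Phi_x$ (resp. (strong density) $\phi=\vee\{\psi^{\downarrow x}\in\Gamma_x:\ \psi\in\Phi,\ x\le d(\psi),\ \psi^{\downarrow x}\otimes e_\top\in\Gamma_\top,\ \psi^{\downarrow x}\ll_x\phi\}$ for all $\phi\in\Phi_x$); (compactness) for every directed $X\subseteq\Gamma_x$ and $\phi\in\Gamma_x$ with $\phi\le\vee X$ there is $\psi\in X$ with $\phi\le\psi$. In this case $\Gamma_x=\Phi_{f,x}$. The associated domain-free algebra: for $y\ge d(\phi)$ let $\phi^{\uparrow y}=\phi\otimes e_y$; $\phi\equiv\psi\pmod\sigma$ iff $\phi^{\uparrow d(\phi)\vee d(\psi)}=\psi^{\uparrow d(\phi)\vee d(\psi)}$; on $\Phi/\sigma$, $[\phi]_\sigma\otimes[\psi]_\sigma=[\phi\otimes\psi]_\sigma$ and $[\phi]_\sigma^{\Rightarrow x}=[(\phi^{\uparrow x\vee d(\phi)})^{\downarrow x}]_\sigma$. A domain-free information algebra $(\Phi',D)$ (combination associative, commutative, with neutral element $e$, focusing $\Rightarrow$ satisfying transitivity, combination, support and idempotency axioms), with $D$ having a top element, is compact (resp. s-compact) if there exists $\Gamma\subseteq\Phi'$, closed under combination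 and containing $e$, such that every directed subset of $\Gamma$ has a supremum in $\Phi'$; $\phi=\vee\{\psi\in\Gamma:\psi\ll\phi\}$ for all $\phi$ (resp. $\phi^{\Rightarrow x}=\vee\{\psi\in\Gamma:\psi=\psi^{\Rightarrow x}\ll\phi\}$ for all $\phi,x$); and for every directed $X\subseteq\Gamma$ and $\phi\in\Gamma$ with $\phi\le\vee X$ there is $\psi\in X$ with $\phi\le\psi$. *)

(* Defs.v *)
From HB Require Import structures.
From mathcomp Require Import all_boot all_order.
From Stdlib Require Import ClassicalEpsilon.

Unset Printing Implicit Defensive.

Import Order.LTheory.
Local Open Scope order_scope.

Section Poset.
Variables (T : Type) (le : T -> T -> Prop).

Definition directed (X : T -> Prop) : Prop :=
  (exists a, X a) /\
  (forall a b, X a -> X b -> exists c, X c /\ le a c /\ le b c).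

Definition is_sup_in (P X : T -> Prop) (s : T) : Prop :=
  P s /\ (forall a, X a -> le a s) /\
  (forall u, P u -> (forall a, X a -> le a u) -> le s u).

Definition way_below_in (P : T -> Prop) (a b : T) : Prop :=
  forall X : T -> Prop, (forall c, X c -> P c) -> directed X ->
  forall s, is_sup_in P X s -> le b s -> exists c, X c /\ le a c.

End Poset.
Arguments directed {T} le X.
Arguments is_sup_in {T} le P X s.
Arguments way_below_in {T} le P a b.

Definition allT {T : Type} : T -> Prop := fun _ => True.

(* Signature: carrier Phi, labeling d, combination, marginalization
   (total function; only meaningful for x <= d phi), neutral elements e_s. *)
Record LSig (disp : Order.disp_t) (D : tLatticeType disp) := MkLSig {
  car : Type;
  lab : car -> D;
  lcomb : car -> car -> car;
  lmarg : car -> D -> car;   (* lmarg phi x = phi^{down x} *)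
  lneut : D -> car
}.
Arguments LSig {disp} D.
Arguments car {disp D} l.
Arguments lab {disp D} l _.
Arguments lcomb {disp D} l _ _.
Arguments lmarg {disp D} l _ _.
Arguments lneut {disp D} l _.

Section Labeled.
Context {disp : Order.disp_t} {D : tLatticeType disp} (A : LSig D).

Local Notation Phi := (car A).
Local Notation d := (@lab _ _ A).
Local Notation comb := (@lcomb _ _ A).
Local Notation marg := (@lmarg _ _ A).
Local Notation e := (@lneut _ _ A).

Definition labeled_info_algebra : Prop :=
  (forall a b c, comb a (comb b c) = comb (comb a b) c) /\
  (forall a b, comb a b = comb b a) /\
  (forall s, d (e s) = s) /\
  (forall s phi, d phi = s -> comb (e s) phi = phi) /\
  (forall a b, d (comb a b) = d a `|` d b) /\
  (forall phi x, x <= d phi -> d (marg phi x) = x) /\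
  (forall phi x y, x <= y -> y <= d phi -> marg (marg phi y) x = marg phi x) /\
  (forall phi psi x y, d phi = x -> d psi = y ->
       marg (comb phi psi) x = comb phi (marg psi (x `&` y))) /\
  (forall x y, x <= y -> marg (e y) x = e x) /\
  (forall phi x, x <= d phi -> comb phi (marg phi x) = phi).

Definition lle (psi phi : Phi) : Prop := comb psi phi = phi.

Definition Phi_x (x : D) : Phi -> Prop := fun phi => d phi = x.

Definition ll_x (x : D) (a b : Phi) : Prop := way_below_in lle (Phi_x x) a b.

Definition Phi_f (x : D) : Phi -> Prop := fun psi => Phi_x x psi /\ ll_x x psi psi.

Definition labeled_compact_base (Gamma : D -> Phi -> Prop) : Prop :=
  labeled_info_algebra /\
  (forall x psi, Gamma x psi -> d psi = x) /\
  (forall x a b, Gamma x a -> Gamma x b -> Gamma x (comb a b)) /\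
  (forall x, Gamma x (e x)) /\
  (forall x (X : Phi -> Prop), (forall a, X a -> Gamma x a) -> directed lle X ->
     exists s, is_sup_in lle (Phi_x x) X s) /\
  (forall x (X : Phi -> Prop) phi, (forall a, X a -> Gamma x a) -> directed lle X ->
     Gamma x phi -> forall s, is_sup_in lle (Phi_x x) X s -> lle phi s ->
     exists psi, X psi /\ lle phi psi).

Definition labeled_compact (Gamma : D -> Phi -> Prop) : Prop :=
  labeled_compact_base Gamma /\
  (forall x phi, d phi = x ->
     is_sup_in lle (Phi_x x) (fun psi => Gamma x psi /\ ll_x x psi phi) phi).

Definition labeled_scompact (Gamma : D -> Phi -> Prop) : Prop :=
  labeled_compact_base Gamma /\
  (forall x phi, d phi = x ->
     is_sup_in lle (Phi_x x)
       (fun chi => exists psi, x <= d psi /\ chi = marg psi x /\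
                   Gamma x chi /\ Gamma \top (comb chi (e \top)) /\
                   ll_x x chi phi)
       phi).

Definition vac (phi : Phi) (y : D) : Phi := comb phi (e y).   (* phi^{up y} *)

Definition sigma (phi psi : Phi) : Prop :=
  vac phi (d phi `|` d psi) = vac psi (d phi `|` d psi).

Record QT := MkQT { qpred : Phi -> Prop; qprop : exists phi, qpred = sigma phi }.

Definition cls (phi : Phi) : QT := @MkQT (sigma phi) (ex_intro _ phi erefl).

Definition rep (q : QT) : Phi :=
  proj1_sig (constructive_indefinite_description _ (qprop q)).

Definition qcomb (a b : QT) : QT := cls (comb (rep a) (rep b)).

Definition qfocus (a : QT) (x : D) : QT :=
  cls (marg (vac (rep a) (x `|` d (rep a))) x).

Definition qneut : QT := cls (e \top).

End Labeled.
Arguments QT {disp D} A.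
Arguments MkQT {disp D A} qpred qprop.
Arguments qprop {disp D A} q.

Section DomainFree.
Context {disp : Order.disp_t} {D : tLatticeType disp}.
Variables (T : Type) (comb : T -> T -> T) (e : T) (focus : T -> D -> T).

Definition df_info_algebra : Prop :=
  (forall a b c, comb a (comb b c) = comb (comb a b) c) /\
  (forall a b, comb a b = comb b a) /\
  (forall phi, comb phi e = phi) /\
  (forall phi x y, focus (focus phi x) y = focus phi (x `&` y)) /\
  (forall phi psi x, focus (comb (focus phi x) psi) x = comb (focus phi x) (focus psi x)) /\
  (forall phi, exists x, focus phi x = phi) /\
  (forall phi x, comb phi (focus phi x) = phi).

Definition dle (psi phi : T) : Prop := comb psi phi = phi.

Definition df_compact_base (Gamma : T -> Prop) : Prop :=
  (forall a b, Gamma a -> Gamma b -> Gamma (comb a b)) /\ Gamma e /\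
  (forall X : T -> Prop, (forall a, X a -> Gamma a) -> directed dle X ->
     exists s, is_sup_in dle allT X s) /\
  (forall (X : T -> Prop) phi, (forall a, X a -> Gamma a) -> directed dle X ->
     Gamma phi -> forall s, is_sup_in dle allT X s -> dle phi s ->
     exists psi, X psi /\ dle phi psi).

Definition df_compact : Prop :=
  df_info_algebra /\
  exists Gamma : T -> Prop, df_compact_base Gamma /\
    (forall phi, is_sup_in dle allT
        (fun psi => Gamma psi /\ way_below_in dle allT psi phi) phi).

Definition df_scompact : Prop :=
  df_info_algebra /\
  exists Gamma : T -> Prop, df_compact_base Gamma /\
    (forall phi x, is_sup_in dle allT
        (fun psi => Gamma psi /\ psi = focus psi x /\ way_below_in dle allT psi phi)
        (focus phi x)).

End DomainFree.
Arguments df_info_algebra {disp D T} comb e focus.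
Arguments df_compact {disp D T} comb e focus.
Arguments df_scompact {disp D T} comb e focus.

(* Main.v *)
Require Import Defs.
From mathcomp Require Import all_boot all_order.
From Stdlib Require Import ClassicalEpsilon FunctionalExtensionality PropExtensionality ProofIrrelevance.

Import Order.LTheory.
Local Open Scope order_scope.

Section Alg.
Context {disp : Order.disp_t} {D : tLatticeType disp} (A : LSig D).
Hypothesis HA : labeled_info_algebra A.
Local Notation Phi := (car A).
Local Notation d := (lab A).
Local Notation comb := (lcomb A).
Local Notation marg := (lmarg A).
Local Notation e := (lneut A).

Lemma A1 a b c : comb a (comb b c) = comb (comb a b) c.
Proof. by move: HA => [? [? [? [? [? [? [? [? [? ?]]]]]]]]]. Qed.
Lemma A2 a b : comb a b = comb b a.
Proof. by move: HA => [? [? [? [? [? [? [? [? [? ?]]]]]]]]]. Qed.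
Lemma dE s : d (e s) = s.
Proof. by move: HA => [? [? [? [? [? [? [? [? [? ?]]]]]]]]]. Qed.
Lemma eL s phi : d phi = s -> comb (e s) phi = phi.
Proof. by move: HA => [? [? [? [H [? [? [? [? [? ?]]]]]]]]]; apply: H. Qed.
Lemma eR s phi : d phi = s -> comb phi (e s) = phi.
Proof. by move=> H; rewrite A2 eL. Qed.
Lemma dC a b : d (comb a b) = d a `|` d b.
Proof. by move: HA => [? [? [? [? [? [? [? [? [? ?]]]]]]]]]. Qed.
Lemma dM phi x : x <= d phi -> d (marg phi x) = x.
Proof. by move: HA => [? [? [? [? [? [H [? [? [? ?]]]]]]]]]; apply: H. Qed.
Lemma mM phi x y : x <= y -> y <= d phi -> marg (marg phi y) x = marg phi x.
Proof. by move: HA => [? [? [? [? [? [? [H [? [? ?]]]]]]]]]; apply: H. Qed.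
Lemma cM phi psi x y : d phi = x -> d psi = y ->
  marg (comb phi psi) x = comb phi (marg psi (x `&` y)).
Proof. by move: HA => [? [? [? [? [? [? [? [H [? ?]]]]]]]]]; apply: H. Qed.
Lemma eM x y : x <= y -> marg (e y) x = e x.
Proof. by move: HA => [? [? [? [? [? [? [? [? [H ?]]]]]]]]]; apply: H. Qed.
Lemma idem phi x : x <= d phi -> comb phi (marg phi x) = phi.
Proof. by move: HA => [? [? [? [? [? [? [? [? [? H]]]]]]]]]; apply: H. Qed.

Lemma margd phi : marg phi (d phi) = phi.
Proof.
have := cM phi (e (d phi)) (d phi) (d phi) erefl (dE _).
by rewrite eR // meetxx eM // eR.
Qed.

Lemma combxx phi : comb phi phi = phi.
Proof. by rewrite -{2}(margd phi) idem. Qed.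

Lemma ee y z : comb (e y) (e z) = e (y `|` z).
Proof.
have h1 : comb (e (y `|` z)) (e y) = e (y `|` z).
  by rewrite -(eM _ _ (leUl y z)) idem // dE leUl.
have h2 : comb (e (y `|` z)) (e z) = e (y `|` z).
  by rewrite -(eM _ _ (leUr z y)) idem // dE leUr.
rewrite -(eL (y `|` z) (comb (e y) (e z))); last by rewrite dC !dE.
by rewrite A1 h1 h2.
Qed.

Lemma vacle phi y : y <= d phi -> comb phi (e y) = phi.
Proof.
move=> hy; rewrite -{1}(eR (d phi) phi erefl) -A1 ee join_l //.
exact: eR.
Qed.

Definition U phi := comb phi (e \top).

Lemma dU phi : d (U phi) = \top.
Proof. by rewrite /U dC dE joinx1. Qed.

Lemma Uvac phi y : U (comb phi (e y)) = U phi.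
Proof. by rewrite /U -A1 ee joinx1. Qed.

Lemma UU phi : U (U phi) = U phi.
Proof. exact: Uvac. Qed.

Lemma UC a b : U (comb a b) = comb (U a) (U b).
Proof.
rewrite /U -!A1 (A1 (e _) b) (A2 (e _) b) -A1 ee joinxx //.
Qed.

Lemma VM chi z w : d chi = z -> z <= w -> marg (comb chi (e w)) z = chi.
Proof.
move=> hz hw; rewrite (cM chi (e w) z w hz (dE _)) meet_l // eM //; exact: eR.
Qed.

Lemma MV chi x w : x <= d chi -> d chi <= w ->
  marg (comb chi (e w)) x = marg chi x.
Proof.
move=> hx hw; rewrite -(mM _ x (d chi)) ?VM //.
by rewrite dC dE join_r.
Qed.

Lemma Usig phi psi : sigma A phi psi <-> U phi = U psi.
Proof.
rewrite /sigma /vac; split=> H.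
  by rewrite -(Uvac phi (d phi `|` d psi)) H Uvac.
set z := d phi `|` d psi.
have hp : d (comb phi (e z)) = z by rewrite dC dE /z joinA joinxx.
have hq : d (comb psi (e z)) = z by rewrite dC dE /z joinCA joinxx.
rewrite -(VM _ _ _ hp (lex1 z)) -(VM _ _ _ hq (lex1 z)).
by rewrite -/(U (comb phi (e z))) -/(U (comb psi (e z))) !Uvac H.
Qed.


Lemma QT_eq (q1 q2 : QT A) : qpred A q1 = qpred A q2 -> q1 = q2.
Proof.
case: q1 => p1 h1; case: q2 => p2 h2 /= E; subst p2.
by rewrite (proof_irrelevance _ h1 h2).
Qed.

Lemma cls_eq phi psi : U phi = U psi -> cls A phi = cls A psi.
Proof.
move=> H; apply: QT_eq => /=.
apply: functional_extensionality => chi; apply: propositional_extensionality.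
by rewrite !Usig H.
Qed.

Lemma cls_eq_inv phi psi : cls A phi = cls A psi -> U phi = U psi.
Proof.
move=> /(congr1 (qpred A)) /= E.
have : sigma A phi phi by apply/Usig.
by rewrite E => /Usig.
Qed.

Lemma rep_spec q : qpred A q = sigma A (rep A q).
Proof.
by rewrite /rep; case: (constructive_indefinite_description _ _).
Qed.

Lemma cls_rep q : cls A (rep A q) = q.
Proof. by apply: QT_eq => /=; rewrite rep_spec. Qed.

Definition up (q : QT A) := U (rep A q).

Lemma up_cls phi : up (cls A phi) = U phi.
Proof. exact: cls_eq_inv (cls_rep _). Qed.

Lemma cls_up q : cls A (up q) = q.
Proof. by rewrite -{2}(cls_rep q); apply: cls_eq; rewrite /up UU. Qed.

Lemma up_inj a b : up a = up b -> a = b.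
Proof. by move=> H; rewrite -(cls_up a) -(cls_up b) H. Qed.

Lemma dup q : d (up q) = \top.
Proof. exact: dU. Qed.

Lemma up_fg p : d p = \top -> up (cls A p) = p.
Proof. by move=> H; rewrite up_cls /U vacle // H. Qed.

Lemma up_comb a b : up (qcomb A a b) = comb (up a) (up b).
Proof. by rewrite /qcomb up_cls UC. Qed.

Lemma up_neut : up (qneut A) = e \top.
Proof. by rewrite /qneut up_cls /U ee joinxx. Qed.

Lemma up_focus a x : up (qfocus A a x) = U (marg (up a) x).
Proof.
rewrite /qfocus /vac up_cls /up; set r := rep A a.
set chi := comb r (e (x `|` d r)).
have hx : x <= d chi by rewrite /chi dC dE (le_trans (leUl x (d r))) // leUr.
by rewrite -(MV _ _ _ hx (lex1 _)) -/(U chi) /chi Uvac.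
Qed.

Lemma UM m x y : d m = x -> U (marg (U m) y) = U (marg m (x `&` y)).
Proof.
move=> hm.
have h1 : U m = U (comb m (e (x `|` y))) by rewrite Uvac.
have hd : d (comb m (e (x `|` y))) = x `|` y by rewrite dC dE hm joinA joinxx.
rewrite h1 /U (MV _ _ _ (_ : y <= _) (lex1 _)); last by rewrite hd leUr.
rewrite -ee A1 (eR _ _ hm) (A2 m (e y)) (cM _ _ y x (dE _) hm).
by rewrite meetC (A2 (e y)) -A1 ee joinx1.
Qed.

Lemma df_alg : df_info_algebra (qcomb A) (qneut A) (qfocus A).
Proof.
split; first by move=> a b c; apply: up_inj; rewrite !up_comb A1.
split; first by move=> a b; apply: up_inj; rewrite !up_comb A2.
split; first by move=> a; apply: up_inj; rewrite up_comb up_neut eR // dup.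
split.
  move=> a x y; apply: up_inj; rewrite !up_focus (UM _ x); last by rewrite dM // dup lex1.
  by rewrite mM // ?leIl // dup lex1.
split.
  move=> a b x; apply: up_inj; rewrite !(up_focus, up_comb).
  set m := marg (up a) x.
  have hm : d m = x by rewrite dM // dup lex1.
  rewrite /U -A1 (eL _ _ (dup b)) (cM _ _ x \top hm (dup b)) meetx1.
  by rewrite -/(U _) UC.
split.
  move=> a; exists \top; apply: up_inj; rewrite up_focus.
  by have := margd (up a); rewrite dup => ->; rewrite /up UU.
move=> a x; apply: up_inj; rewrite up_comb up_focus /U A1 idem ?dup ?lex1 //.
by rewrite eR // dup.
Qed.

Local Notation le1 := (dle _ (qcomb A)).
Local Notation le2 := (lle A).
Local Notation P := (Phi_x A \top).

Lemma fle a b : le1 a b <-> le2 (up a) (up b).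
Proof.
rewrite /dle /lle; split=> H; first by rewrite -up_comb H.
by apply: up_inj; rewrite up_comb.
Qed.

Definition img (X : QT A -> Prop) : Phi -> Prop :=
  fun b => exists a, X a /\ b = up a.

Lemma imgP X b : img X b -> P b.
Proof. by move=> [a [_ ->]]; apply: dup. Qed.

Lemma dir_img X : directed le1 X -> directed le2 (img X).
Proof.
move=> [[a0 Xa0] H]; split; first by exists (up a0), a0.
move=> _ _ [a [Xa ->]] [b [Xb ->]].
have [c [Xc [ac bc]]] := H a b Xa Xb.
by exists (up c); split; [exists c | split; apply/fle].
Qed.

Lemma dir_pre (Y : Phi -> Prop) : (forall b, Y b -> P b) -> directed le2 Y ->
  directed le1 (fun a => Y (up a)).
Proof.
move=> YP [[b Yb] H]; split; first by exists (cls A b); rewrite up_fg //; apply: YP.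
move=> a1 a2 Y1 Y2.
have [c [Yc [l1 l2]]] := H _ _ Y1 Y2.
have fgc : up (cls A c) = c by apply: up_fg; apply: YP.
by exists (cls A c); rewrite fgc; split=> //; split; apply/fle; rewrite fgc.
Qed.

Lemma sup_img X s : is_sup_in le1 Defs.allT X s <-> is_sup_in le2 P (img X) (up s).
Proof.
split.
- move=> [_ [ub lub]]; split; first exact: dup.
  split; first by move=> _ [a [Xa ->]]; apply/fle/ub.
  move=> u Pu H; rewrite -(up_fg _ Pu); apply/fle/lub => // a Xa.
  apply/fle; rewrite (up_fg _ Pu); apply: H; by exists a.
- move=> [_ [ub lub]]; split=> //; split.
  + move=> a Xa; apply/fle/ub; by exists a.
  + move=> u _ H; apply/fle/lub; first exact: dup.
    move=> _ [a [Xa ->]]; apply/fle/H => //.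
Qed.

Lemma sup_pre (Y : Phi -> Prop) s : (forall b, Y b -> P b) ->
  is_sup_in le2 P Y (up s) <-> is_sup_in le1 Defs.allT (fun a => Y (up a)) s.
Proof.
move=> YP; split.
- move=> [_ [ub lub]]; split=> //; split.
  + by move=> a Ya; apply/fle/ub.
  + move=> u _ H; apply/fle/lub; first exact: dup.
    move=> b Yb; have E := up_fg _ (YP _ Yb); rewrite -E; apply/fle/H; by rewrite E.
- move=> [_ [ub lub]]; split; first exact: dup.
  split.
  + move=> b Yb; have E := up_fg _ (YP _ Yb); rewrite -E; apply/fle/ub; by rewrite E.
  + move=> u Pu H; rewrite -(up_fg _ Pu); apply/fle/lub => // a Ya.
    apply/fle; rewrite (up_fg _ Pu); exact: H.
Qed.

Lemma wb_tr a b : way_below_in le1 Defs.allT a b <-> way_below_in le2 P (up a) (up b).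
Proof.
split.
- move=> H Y YP dY s2 sup2 bs.
  have E := up_fg _ (proj1 sup2).
  have sup1 : is_sup_in le1 Defs.allT (fun a => Y (up a)) (cls A s2).
    by apply/sup_pre => //; rewrite E.
  have bs' : le1 b (cls A s2) by apply/fle; rewrite E.
  have [c [Yc ac]] := H _ (fun _ _ => I) (dir_pre _ YP dY) _ sup1 bs'.
  by exists (up c); split=> //; apply/fle.
- move=> H X _ dX s sup1 bs.
  have [c2 [[c [Xc ->]] ac]] := H (img X) (@imgP X) (dir_img _ dX) _
     (proj1 (sup_img X s) sup1) (proj1 (fle _ _) bs).
  by exists c; split=> //; apply/fle.
Qed.

Lemma sup_ext (T : Type) (le : T -> T -> Prop) Q (X X' : T -> Prop) s :
  (forall a, X a <-> X' a) -> is_sup_in le Q X s -> is_sup_in le Q X' s.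
Proof.
move=> E [Qs [ub lub]]; split=> //; split.
  by move=> a /E; apply: ub.
by move=> u Qu H; apply: lub => // a /E; apply: H.
Qed.

Definition Gam (q : QT A) : Prop := Phi_f A \top (up q).

Lemma imgG X : (forall a, X a -> Gam a) -> forall b, img X b -> Phi_f A \top b.
Proof. by move=> XG _ [a [Xa ->]]; apply: XG. Qed.

Lemma base : labeled_compact_base A (Phi_f A) ->
  df_compact_base _ (qcomb A) (qneut A) Gam.
Proof.
move=> [_ [Gd [Gc [Ge [Conv Cpt]]]]].
split; first by move=> a b ga gb; rewrite /Gam up_comb; exact: Gc.
split; first by rewrite /Gam up_neut; apply: Ge.
split.
  move=> X XG dX.
  have [s' hs] := Conv \top (img X) (imgG _ XG) (dir_img _ dX).
  exists (cls A s'); apply/sup_img; rewrite up_fg //; exact: (proj1 hs).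
move=> X phi XG dX gphi s hs phis.
have [psi [[c [Xc ->]] h]] := Cpt \top (img X) (up phi)
   (imgG _ XG)
   (dir_img _ dX) gphi (up s) (proj1 (sup_img X s) hs) (proj1 (fle _ _) phis).
by exists c; split=> //; apply/fle.
Qed.

Lemma lle_trans a b c : le2 a b -> le2 b c -> le2 a c.
Proof. by rewrite /lle => hab hbc; rewrite -hbc A1 hab. Qed.

Lemma margmono a b x : d a = d b -> x <= d a -> le2 a b -> le2 (marg a x) (marg b x).
Proof.
rewrite /lle => hd hx hab.
have h : comb (marg a x) b = b by rewrite -hab A1 (A2 (marg a x)) idem.
rewrite -{2}h (cM _ _ x (d b) (dM _ _ hx) erefl) meet_l //; by rewrite -hd.
Qed.

Lemma Umono a b : le2 a b -> le2 (U a) (U b).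
Proof. by rewrite /lle => h; rewrite -UC h. Qed.

Lemma marg_le a x : x <= d a -> le2 (marg a x) a.
Proof. by move=> hx; rewrite /lle A2 idem. Qed.

Lemma wb_le a b : way_below_in le2 P a b -> P b -> le2 a b.
Proof.
move=> H Pb.
have dX : directed le2 (fun c => c = b).
  split; first by exists b.
  by move=> _ _ -> ->; exists b; rewrite /lle combxx.
have sX : is_sup_in le2 P (fun c => c = b) b.
  split=> //; split; first by move=> _ ->; exact: combxx.
  by move=> u _ h; apply: h.
have [c [-> //]] := H (fun c => c = b) (fun c e => eq_ind_r _ Pb e) dX b sX (combxx b).
Qed.

Lemma wb_cpt a b : way_below_in le2 P a a -> le2 a b -> way_below_in le2 P a b.
Proof.
move=> H ab X XP dX s hs bs; apply: (H X XP dX s hs); exact: (lle_trans _ _ _ ab bs).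
Qed.

Lemma dens_c : (forall x phi, d phi = x -> is_sup_in le2 (Phi_x A x)
       (fun psi => Phi_f A x psi /\ ll_x A x psi phi) phi) ->
  forall phi, is_sup_in le1 Defs.allT
     (fun psi => Gam psi /\ way_below_in le1 Defs.allT psi phi) phi.
Proof.
move=> H phi; have h := H \top (up phi) (dup phi).
have h2 := proj1 (sup_pre _ phi (fun b hb => proj1 (proj1 hb))) h.
apply: sup_ext h2 => q /=; rewrite /Gam /ll_x.
by split=> [[g w] | [g w]]; split=> //; apply/wb_tr.
Qed.

Lemma dens_s : (forall x phi, d phi = x ->
     is_sup_in le2 (Phi_x A x)
       (fun chi => exists psi, x <= d psi /\ chi = marg psi x /\
                   Phi_f A x chi /\ Phi_f A \top (comb chi (e \top)) /\
                   ll_x A x chi phi)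
       phi) ->
  forall phi x, is_sup_in le1 Defs.allT
     (fun psi => Gam psi /\ psi = qfocus A psi x /\
                 way_below_in le1 Defs.allT psi phi) (qfocus A phi x).
Proof.
move=> SD phi x; apply/sup_img; rewrite up_focus.
set p := up phi; set m := marg p x.
have hm : d m = x by rewrite dM // dup lex1.
have hs := SD x m hm.
have Up : U p = p by rewrite /p /up UU.
have mp : le2 (U m) p by rewrite -Up; apply: Umono; apply: marg_le; rewrite dup lex1.
split; first exact: dU.
split.
  move=> _ [q [[gq [qf wq]] ->]].
  rewrite qf up_focus; apply: Umono; apply: margmono; rewrite ?dup ?lex1 //.
  by apply: wb_le; [apply/wb_tr | exact: dup].
move=> u Pu H.
have ubC : forall c, (exists psi, x <= d psi /\ c = marg psi x /\
                   Phi_f A x c /\ Phi_f A \top (comb c (e \top)) /\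
                   ll_x A x c m) -> le2 c (marg u x).
  move=> c hc; have cm : le2 c m := proj1 (proj2 hs) c hc.
  move: hc => [psi [_ [_ [fc [ft llc]]]]].
  have dc : d c = x := proj1 fc.
  have Sq : Gam (cls A c) /\ cls A c = qfocus A (cls A c) x /\
            way_below_in le1 Defs.allT (cls A c) phi.
    split; first by rewrite /Gam up_cls; exact: ft.
    split.
      apply: up_inj; rewrite up_focus up_cls (UM _ x) // meetxx.
      by have := margd c; rewrite dc => ->.
    apply/wb_tr; rewrite up_cls; apply: wb_cpt; first exact: (proj2 ft).
    exact: (lle_trans _ _ _ (Umono _ _ cm) mp).
  have h := H (up (cls A c)) (ex_intro _ _ (conj Sq erefl)).
  rewrite up_cls in h.
  rewrite -(VM _ _ _ dc (lex1 x)); apply: margmono; rewrite ?dU ?lex1 //.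
have mu : le2 m (marg u x).
  apply: (proj2 (proj2 hs)) => //; rewrite /Phi_x dM // Pu lex1 //.
apply: (lle_trans _ _ _ (Umono _ _ mu)); rewrite -{2}(vacle u \top) ?Pu //.
apply: Umono; apply: marg_le; rewrite Pu lex1 //.
Qed.

End Alg.

Theorem theorem4p11 (disp : Order.disp_t) (D : tLatticeType disp)
    (A : LSig D) :
  (labeled_compact A (Phi_f A) ->
     df_compact (qcomb A) (qneut A) (qfocus A)) /\
  (labeled_scompact A (Phi_f A) ->
     df_scompact (qcomb A) (qneut A) (qfocus A)).
Proof.
split.
- move=> [LB dens]; have HA := proj1 LB.
  split; first exact: df_alg.
  exists (Gam A); split; first exact: base.
  exact: dens_c.
- move=> [LB dens]; have HA := proj1 LB.
  split; first exact: df_alg.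
  exists (Gam A); split; first exact: base.
  exact: dens_s.
Qed.
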